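(* If $G$ is a simple graph of order $n\geq 3$ with minimum degree $\delta(G)\geq \frac{n}{2}$, then $px_k(G)=2$ for each integer $k$ with $3\leq k\leq n$.
   Context: All graphs are finite, simple, undirected and connected. An edge-coloring of a graph assigns a color to each edge (adjacent edges may receive the same color). A tree in an edge-colored graph is proper if any two adjacent edges of the tree receive different colors. For $S\subseteq V(G)$, an $S$-tree is a subgraph of $G$ that is a tree containing all vertices of $S$. For a connected graph $G$ of order $n$ and an integer $k$ with $2\le k\le n$, an edge-coloring of $G$ is a $k$-proper coloring if for every set $S$ of $k$ vertices of $G$ there exists a proper $S$-tree in $G$. The $k$-proper index $px_k(G)$ is the minimum number of colors used in a $k$-proper coloring of $G$. *)

(* Defs.v *)
From mathcomp Require Import all_boot.
Set Implicit Arguments. Unset Strict Implicit. Unset Printing Implicit Defensive.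

(* A simple graph is a symmetric irreflexive relation e on a finite type T;
   its edges are the 2-element sets [set x; y] with e x y. *)

Section ProperIndex.
Variable T : finType.
Variable e : rel T.

Definition simple_graph := symmetric e /\ irreflexive e.
Definition graph_connected := forall x y : T, connect e x y.
Definition degree (v : T) := #|[set u | e v u]|.

Definition adjF (F : {set {set T}}) : rel T := [rel a b | [set a; b] \in F].

Definition is_subtree (V : {set T}) (F : {set {set T}}) : Prop :=
  [/\ V != set0,
      (forall f, f \in F -> exists x y, [/\ e x y, x \in V, y \in V & f = [set x; y]]),
      (forall x y, x \in V -> y \in V -> connect (adjF F) x y) &
      (forall s : seq T, uniq s -> 2 < size s -> ~~ cycle (adjF F) s)].

Definition edge_coloring (m : nat) (c : T -> T -> 'I_m) : Prop :=
  forall x y, c x y = c y x.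

Definition proper_tree (m : nat) (c : T -> T -> 'I_m) (F : {set {set T}}) : Prop :=
  forall x y z, x != z -> [set x; y] \in F -> [set y; z] \in F -> c x y != c y z.

Definition k_proper_coloring (k m : nat) (c : T -> T -> 'I_m) : Prop :=
  forall S : {set T}, #|S| = k ->
    exists (V : {set T}) (F : {set {set T}}),
      [/\ S \subset V, is_subtree V F & proper_tree c F].

Definition proper_index_is (k m : nat) : Prop :=
  (exists c : T -> T -> 'I_m, edge_coloring c /\ k_proper_coloring k c) /\
  (forall m', m' < m -> forall c : T -> T -> 'I_m',
      edge_coloring c -> ~ k_proper_coloring k c).

End ProperIndex.

(* Main.v *)
Require Import Defs.
From mathcomp Require Import all_boot zify.
Set Implicit Arguments. Unset Strict Implicit. Unset Printing Implicit Defensive.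

Section Ham.
Variable T : finType.
Variable e : rel T.
Hypothesis sym : symmetric e.
Hypothesis irr : irreflexive e.
Hypothesis conn : forall x y, connect e x y.
Hypothesis deg : forall v : T, #|T| <= 2 * #|[set u | e v u]|.

Definition good (s : seq T) := if s is x :: p then path e x p && uniq s else false.

Lemma extend s : good s -> size s < #|T| -> exists s', good s' && (size s < size s').
Proof.
case: s => [|x p] //= /andP[pp up] sz.
have upx : uniq (x :: p) := up.
case: (boolP [exists u, e x u && (u \notin x :: p)]).
  case/existsP => u /andP[xu un]; exists (u :: x :: p).
  by rewrite /= sym xu pp un up /=.
move/existsPn => H1.
have {}H1 : forall u, e x u -> u \in x :: p.
  by move=> u xu; move: (H1 u); rewrite xu /= negbK.
set l := last x p.
case: (boolP [exists u, e l u && (u \notin x :: p)]).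
  case/existsP => u /andP[lu un]; exists (x :: rcons p u).
  rewrite /= rcons_path pp lu /=.
  move: un up; rewrite !inE mem_rcons rcons_uniq size_rcons !inE negb_or => /andP[ux up'] /andP[xp ->].
  by rewrite eq_sym (negbTE ux) (negbTE xp) up' /= ltnSn.
move/existsPn => H2.
have {}H2 : forall u, e l u -> u \in x :: p.
  by move=> u xu; move: (H2 u); rewrite xu /= negbK.
set m := size p.
pose I := [set i : 'I_m | e x (nth x p i)].
pose J := [set i : 'I_m | e (nth x (x :: p) i) l].
have hI : #|[set u | e x u]| <= #|I|.
  apply: leq_trans (leq_imset_card (fun i : 'I_m => nth x p i) I).
  apply: subset_leq_card; apply/subsetP => u; rewrite inE => xu.
  move: (H1 u xu); rewrite inE => /orP[/eqP eu|up'].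
    by rewrite eu irr in xu.
  have ilt : index u p < m by rewrite index_mem.
  apply/imsetP; exists (Ordinal ilt); last by rewrite /= nth_index.
  by rewrite inE /= nth_index.
have hJ : #|[set u | e l u]| <= #|J|.
  apply: leq_trans (leq_imset_card (fun i : 'I_m => nth x (x :: p) i) J).
  apply: subset_leq_card; apply/subsetP => u; rewrite inE => lu.
  have us := H2 u lu.
  have ul : u != l by apply/eqP => eu; rewrite eu irr in lu.
  have ilt : index u (x :: p) < m.
    have : index u (x :: p) < m.+1 by rewrite -[m.+1]/(size (x :: p)) index_mem.
    rewrite ltnS leq_eqVlt => /orP[/eqP ei|//].
    by move: ul; rewrite /l (last_nth x) -/m -ei nth_index // eqxx.
  apply/imsetP; exists (Ordinal ilt); last by rewrite /= nth_index.
  by rewrite inE /= nth_index // sym.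
have : 0 < #|I :&: J|.
  have := cardsUI I J; have := max_card (I :|: J); rewrite card_ord.
  have := deg x; have := deg l; move: sz; rewrite /= -/m. move: hI hJ. set A := #|I|. set B := #|J|. set C := #|I :|: J|. set D := #|I :&: J|. set X := #|[set u | e x u]|. set Y := #|[set u | e l u]|. set N := #|T|. lia.
case/card_gt0P => i; rewrite inE !inE => /andP[xi il].
set y := nth x p i; set q := drop i.+1 p; set p1 := take i p.
have ip : i < size p by [].
have Ep : p = p1 ++ y :: q by rewrite /y /q -drop_nth // cat_take_drop.
have Ea : last x p1 = nth x (x :: p) i.
  rewrite (last_nth x) /p1 size_take ip.
  by rewrite -[x :: take i p]/(take i.+1 (x :: p)) nth_take.
have El : l = last y q by rewrite /l Ep last_cat.
pose c := x :: p1 ++ rev (y :: q).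
have cc : cycle e c.
  move: pp; rewrite Ep cat_path /= => /andP[pp1 /andP[ay pyq]].
  rewrite /c /= rcons_cat cat_path pp1 /= -rev_cons.
  rewrite (lastI x (y :: q)) rev_rcons.
  change (e (last x p1) (last x (y :: q)) && path e (last x (y :: q)) (rev (belast x (y :: q)))).
  rewrite rev_path Ea.
  have -> : last x (y :: q) = l by rewrite El.
  rewrite il /= sym xi.
  have -> : path (fun z w => e w z) y q = path e y q.
    by apply: eq_path => a b; rewrite sym.
  by rewrite pyq.
have pc : perm_eq c (x :: p).
  by rewrite /c [in X in perm_eq _ X]Ep perm_cons perm_cat2l perm_rev.
have [z zn] : exists z, z \notin x :: p.
  case: (boolP [exists z, z \notin x :: p]) => [/existsP//|/existsPn H].
  have : #|T| <= #|x :: p|.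
    apply: subset_leq_card; apply/subsetP => z _; by move: (H z); rewrite negbK.
  rewrite (card_uniqP upx) /=; move: sz; set N := #|T|; lia.
have [v [w [vw vin wn]]] : exists v w, [/\ e v w, v \in x :: p & w \notin x :: p].
  case: (boolP [exists v, exists w, [&& e v w, v \in x :: p & w \notin x :: p]]).
    by case/existsP => v /existsP[w /and3P[a b d]]; exists v, w.
  move/existsPn => H.
  have cl : closed e (mem (x :: p)).
    move=> a b ab; case: (boolP (a \in x :: p)) => ain; case: (boolP (b \in x :: p)) => bin //.
      by move: (H a) => /existsPn /(_ b); rewrite ab ain bin.
    by move: (H b) => /existsPn /(_ a); rewrite sym ab ain bin.
  by move: (closed_connect cl (conn x z)); rewrite inE eqxx /= (negbTE zn).
have vc : v \in c by rewrite (perm_mem pc).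
case: (rot_to vc) => j s' Er.
exists (w :: v :: s').
have crs : cycle e (v :: s') by rewrite -Er rot_cycle.
have pv : path e v s' by move: crs; rewrite /= rcons_path => /andP[].
have ps : perm_eq (v :: s') (x :: p) by rewrite -Er (perm_rot j c).
have uv : uniq (v :: s') by rewrite (perm_uniq ps).
rewrite /= sym vw pv /=. move: uv => /= ->. rewrite andbT.
have -> : (w \notin v :: s') = true by rewrite (perm_mem ps).
have := perm_size ps; rewrite /= => ->. by [].
Qed.


Lemma good_size s : good s -> size s <= #|T|.
Proof.
case: s => [|x p] //= /andP[_ u].
have u' : uniq (x :: p) := u.
have := card_uniqP u'; rewrite /= => <-; exact: max_card.
Qed.

Lemma ham (x0 : T) : exists s, good s /\ (forall v, v \in s).
Proof.
have H : forall n, n <= #|T| -> exists s, good s && (n <= size s).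
  elim=> [|n IH] hn.
    by exists [:: x0].
  case: (IH (ltnW hn)) => s /andP[gs ns].
  case: (ltnP n (size s)) => hs.
    by exists s; rewrite gs.
  have : size s < #|T| by apply: leq_ltn_trans hn; [].
  move=> sz; case: (extend gs sz) => s' /andP[gs' ss'].
  by exists s'; rewrite gs' /=; apply: leq_trans ss'; rewrite ltnS.
case: (H _ (leqnn #|T|)) => s /andP[gs ss].
exists s; split => // v.
have ee : size s = #|T| by apply/eqP; rewrite eqn_leq ss good_size.
case: (boolP (v \in s)) => // vn.
have us : uniq s by case: s gs {ss ee vn} => [|x p] //= /andP[_ u].
have : #|s| < #|T|.
  rewrite -(cardC (mem s)) -addn1 leq_add2l; apply/card_gt0P; exists v; by rewrite inE.
by rewrite (card_uniqP us) ee ltnn.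
Qed.
End Ham.

Lemma colneq m n : (n = m.+1 \/ m = n.+1) -> (inord (odd m) : 'I_2) != inord (odd n).
Proof.
move=> H; rewrite -(inj_eq val_inj) /= !inordK; try by case: odd.
by case: H => ->; rewrite /=; case: odd.
Qed.

Section Col.
Variable T : finType.
Variable e : rel T.
Hypothesis sym : symmetric e.
Hypothesis irr : irreflexive e.
Variables (x0 : T) (p : seq T).
Hypothesis pp : path e x0 p.
Hypothesis us : uniq (x0 :: p).
Hypothesis alls : forall v, v \in x0 :: p.

Definition idx v := index v (x0 :: p).
Definition col (a b : T) : 'I_2 := inord (odd (minn (idx a) (idx b))).
Definition Fh : {set {set T}} :=
  [set E | [exists a, exists b, (E == [set a; b]) && (idx b == (idx a).+1)]].

Lemma idx_inj a b : idx a = idx b -> a = b.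
Proof. by move=> h; rewrite -(nth_index x0 (alls a)) -/(idx a) h nth_index. Qed.

Lemma idx_lt a : idx a < size (x0 :: p).
Proof. by rewrite /idx index_mem. Qed.

Lemma mem2 u a b : u \in [set a; b] -> idx u = idx a \/ idx u = idx b.
Proof. by rewrite !inE => /orP[]/eqP->; auto. Qed.

Lemma inF a b : [set a; b] \in Fh -> idx b = (idx a).+1 \/ idx a = (idx b).+1.
Proof.
rewrite inE => /existsP[a' /existsP[b' /andP[/eqP E /eqP h]]].
have h1 : a \in [set a'; b'] by rewrite -E set21.
have h2 : b \in [set a'; b'] by rewrite -E set22.
have h3 : a' \in [set a; b] by rewrite E set21.
have h4 : b' \in [set a; b] by rewrite E set22.
move: (mem2 h1) (mem2 h2) (mem2 h3) (mem2 h4).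
lia.
Qed.

Lemma inF' a b : idx b = (idx a).+1 -> [set a; b] \in Fh.
Proof.
by move=> h; rewrite inE; apply/existsP; exists a; apply/existsP; exists b; rewrite eqxx h eqxx.
Qed.

Lemma col_sym : edge_coloring col.
Proof. by move=> a b; rewrite /col minnC. Qed.

Lemma col_proper : proper_tree col Fh.
Proof.
move=> x y z xz /inF h1 /inF h2.
have hxz : idx x <> idx z by move=> /idx_inj exz; rewrite exz eqxx in xz.
apply: colneq; lia.
Qed.

Lemma adj_sym : symmetric (adjF Fh).
Proof. by move=> a b; rewrite /adjF /= setUC. Qed.

Lemma conn0 i : i < size (x0 :: p) -> connect (adjF Fh) x0 (nth x0 (x0 :: p) i).
Proof.
elim: i => [|i IH] hi; first exact: connect0.
apply: connect_trans (IH (ltnW hi)) (connect1 _).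
rewrite /adjF /=; apply: inF'.
rewrite /idx (index_uniq x0 (ltnW hi) us) -[nth x0 p i]/(nth x0 (x0 :: p) i.+1) index_uniq //.
Qed.

Lemma Fh_tree : is_subtree e [set: T] Fh.
Proof.
split.
- by apply/set0Pn; exists x0; rewrite inE.
- move=> f; rewrite inE => /existsP[a /existsP[b /andP[/eqP -> /eqP h]]].
  exists a, b; split; rewrite ?inE //.
  have hb := idx_lt b; rewrite h /= ltnS in hb.
  move/pathP: pp => /(_ x0 _ hb).
  rewrite -/(idx a) /idx nth_index //.
  have -> : nth x0 p (index a (x0 :: p)) = nth x0 (x0 :: p) (index b (x0 :: p)).
    by rewrite -/(idx b) h.
  by rewrite nth_index.
- move=> a b _ _.
  have cs := sym_connect_sym adj_sym.
  apply: (connect_trans (y := x0)).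
    rewrite cs -(nth_index x0 (alls a)); exact: conn0 (idx_lt a).
  rewrite -(nth_index x0 (alls b)); exact: conn0 (idx_lt b).
- move=> t ut st; apply/negP => ct.
  case: t ut st ct => [|t0 t1] // ut st ct.
  case: (@arg_maxnP T t0 (mem (t0 :: t1)) idx (mem_head _ _)) => y yin ymax.
  case: (rot_to yin) => k t' Er.
  have ct' : cycle (adjF Fh) (y :: t') by rewrite -Er rot_cycle.
  have ut' : uniq (y :: t') by rewrite -Er rot_uniq.
  have st' : 2 < size (y :: t') by rewrite -Er size_rot.
  have pm : forall v, (v \in y :: t') = (v \in t0 :: t1) by move=> v; rewrite -Er mem_rot.
  clear Er. case: t' ct' ut' st' pm => [|a [|b0 u]] // ct' ut' st' pm.
  move: ct'; rewrite /= rcons_path => /and4P[ya _ _ by_].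
  set b := last b0 u in by_.
  have ab : a != b.
    apply/eqP => eab; move: ut'; rewrite cons_uniq => /andP[_].
    rewrite cons_uniq => /andP[+ _]; by rewrite eab /b mem_last.
  have ha : idx a <= idx y.
    have : a \in t0 :: t1 by rewrite -pm !inE eqxx orbT.
    exact: ymax.
  have hb : idx b <= idx y.
    have : b \in t0 :: t1 by rewrite -pm !in_cons; apply/orP; right; apply/orP; right; exact: mem_last.
    exact: ymax.
  move: (inF ya) (inF by_) => h1 h2.
  have : idx a = idx b by lia.
  by move/idx_inj => eab; rewrite eab eqxx in ab.
Qed.

End Col.

Lemma two_step (T : finType) (r : rel T) a d : connect r a d -> a != d ->
  r a d \/ exists a1 a2, [/\ r a a1, r a1 a2 & a != a2].
Proof.
case/connectP => q pq ->.
case: (shortenP pq) => q' pq' uq' _.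
case: q' pq' uq' => [|a1 [|a2 q'']] /=; first by rewrite eqxx.
  by rewrite andbT => ? _ _; left.
move=> /and3P[h1 h2 _] /andP[+ _]; rewrite !inE negb_or => /andP[_ /norP[h3 _]] _.
by right; exists a1, a2.
Qed.

Lemma exS (T : finType) j : j <= #|T| -> exists S : {set T}, #|S| = j.
Proof.
elim: j => [|j IH] hj; first by exists set0; rewrite cards0.
case: (IH (ltnW hj)) => S hS.
have [z zn] : exists z, z \notin S.
  case: (boolP [exists z, z \notin S]) => [/existsP//|/existsPn H].
  have : #|T| <= #|S|.
    apply: subset_leq_card; apply/subsetP => z _; by move: (H z); rewrite negbK.
  move: hj; rewrite hS; set N := #|T|; lia.
by exists (z |: S); rewrite cardsU1 zn hS.
Qed.

Lemma no1 (T : finType) (e : rel T) (c : T -> T -> 'I_1) (S V : {set T}) (F : {set {set T}}) :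
  2 < #|S| -> S \subset V -> is_subtree e V F -> ~ proper_tree c F.
Proof.
move=> hS sSV [_ _ cV _] pr.
have key : forall x y z, x != z -> adjF F x y -> adjF F y z -> False.
  move=> x y z xz h1 h2; move: (pr x y z xz h1 h2).
  by rewrite (ord1 (c x y)) (ord1 (c y z)) eqxx.
have [a aS] : exists a, a \in S by apply/card_gt0P; lia.
have h1 : 1 < #|S :\ a| by move: hS; rewrite (cardsD1 a S) aS; lia.
have [b bS] : exists b, b \in S :\ a by apply/card_gt0P; lia.
have h2 : 0 < #|S :\ a :\ b| by move: h1; rewrite (cardsD1 b (S :\ a)) bS; lia.
have [d dS] : exists d, d \in S :\ a :\ b by apply/card_gt0P.
move: bS dS; rewrite !inE => /andP[ba bS] /and3P[db da dS].
have ad' : a != d by rewrite eq_sym.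
have inV : forall v, v \in S -> v \in V by move=> v; apply: (subsetP sSV).
case: (two_step (cV a d (inV _ aS) (inV _ dS)) ad') => [ad|[a1 [a2 [p1 p2 p3]]]];
  last exact: key p3 p1 p2.
case: (two_step (cV b a (inV _ bS) (inV _ aS)) ba) => [bA|[a1 [a2 [p1 p2 p3]]]];
  last exact: key p3 p1 p2.
apply: (key b a d) => //; by rewrite eq_sym.
Qed.

Theorem mainTheorem7 (T : finType) (e : rel T) :
  simple_graph e -> graph_connected e -> 3 <= #|T| ->
  (forall v : T, #|T| <= 2 * degree e v) ->
  forall k : nat, 3 <= k <= #|T| -> proper_index_is e k 2.
Proof.
move=> [sym irr] conn n3 deg k /andP[k3 kn].
have [x0 _] : exists x : T, x \in T by apply/card_gt0P; exact: leq_trans n3.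
case: (ham sym irr conn deg x0) => [[|y p]] [gs alls] //.
move: gs => /= /andP[pp up].
have upx : uniq (y :: p) := up.
split.
  exists (col y p); split; first exact: col_sym.
  move=> S _; exists setT, (Fh y p); split.
  - exact: subsetT.
  - exact: (Fh_tree pp upx alls).
  - exact: (col_proper pp upx alls).
move=> m' hm c _ kp.
case: m' hm c kp => [|[|//]] _ c kp.
  by case: (c y y).
case: (exS kn) => S hS.
case: (kp S hS) => V [F [sub tr hpr]].
apply: (no1 (S := S) _ sub tr hpr); by rewrite hS.
Qed.
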